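(* Let $a_1,a_2,a_3\in\mathbb{R}^N$ be distinct points and let $\epsilon>0$ satisfy $\|a_2-a_3\|>12\epsilon$, $\|a_1-a_2\|>2\epsilon$, $\|a_1-a_3\|>2\epsilon$, and $\mathrm{dist}(a_1,L)>2\epsilon$, where $L$ is the line through $a_2$ and $a_3$. Let $K_1,K_2,K_3$ be obstacles forming an open billiard configuration, with $a_i\in K_i$ and $\mathrm{diam}(K_i)\le\epsilon$ for $i=1,2,3$. For $k\ge1$ let $B_k$ be the word consisting of $(1,2)$ repeated $2^{2k-1}$ times (length $2^{2k}$) followed by $(1,3)$ repeated $2^{2k}$ times (length $2^{2k+1}$), and let $\xi\in\Sigma$ be any sequence whose coordinates $\xi_0,\xi_1,\xi_2,\dots$ are given by the concatenation $B_1B_2B_3\cdots$. Then the rotation vector $\rho_\phi(\xi)=\lim_{n\to\infty}\frac1n\sum_{j=0}^{n-1}\phi(\sigma^j\xi)$ does not exist.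
   Context: An open billiard configuration: the $K_i$ are pairwise disjoint compact strictly convex subsets of $\mathbb{R}^N$ with $C^2$-smooth boundaries satisfying the no-eclipse condition (for distinct $i,j,k$, the convex hull of $K_i\cup K_j$ does not meet $K_k$). $\Sigma$ is the set of bi-infinite sequences $(\xi_i)_{i\in\mathbb{Z}}$ over $\{1,2,3\}$ with $\xi_i\ne\xi_{i+1}$, $\sigma$ the left shift. For $\xi\in\Sigma$ there is a unique billiard trajectory in $\mathbb{R}^N\setminus(K_1\cup K_2\cup K_3)$ with infinitely many reflections forwards and backwards whose $i$-th reflection lies on $\partial K_{\xi_i}$ for every $i\in\mathbb{Z}$; $\phi(\xi)\in\partial K_{\xi_0}$ is its $0$-th reflection point. *)

(* Defs.v *)
From HB Require Import structures.
From mathcomp Require Import all_boot all_order all_algebra.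
From mathcomp Require Import all_classical all_reals all_analysis.
Set Implicit Arguments. Unset Strict Implicit. Unset Printing Implicit Defensive.
Import Order.TTheory GRing.Theory Num.Theory.
Import numFieldNormedType.Exports.
Local Open Scope classical_set_scope.
Local Open Scope ring_scope.

Section Billiard.
Variables (R : realType) (N : nat).
Local Notation V := 'rV[R]_N.

(* Euclidean inner product and Euclidean norm (the library norm on 'rV is the
   sup norm, so we define the Euclidean one explicitly). *)
Definition dotv (u v : V) : R := (u *m v^T) 0 0.
Definition enorm (u : V) : R := Num.sqrt (dotv u u).
Definition unitv (u : V) : V := (enorm u)^-1 *: u.

Definition ediam (A : set V) : R := sup [set enorm (x - y) | x in A & y in A].
Definition edist_set (a : V) (A : set V) : R := inf [set enorm (a - x) | x in A].

Definition line_through (b c : V) : set V := [set b + t *: (c - b) | t in [set: R]].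

Definition bdry (A : set V) : set V := closure A `\` interior A.

Definition convex_set (A : set V) : Prop :=
  forall x y t, A x -> A y -> 0 <= t <= 1 -> A ((1 - t) *: x + t *: y).

Definition strictly_convex (A : set V) : Prop :=
  convex_set A /\
  forall x y t, A x -> A y -> x != y -> 0 < t < 1 ->
    interior A ((1 - t) *: x + t *: y).

Definition conv_hull (A : set V) : set V :=
  [set x | forall C, convex_set C -> A `<=` C -> C x].

Definition basisv (i : 'I_N) : V := delta_mx 0 i.

Definition C2 (f : V -> R) : Prop :=
  continuous f /\
  forall i j : 'I_N,
    (forall x, derivable f x (basisv i)) /\
    continuous (fun x => derive f x (basisv i)) /\
    (forall x, derivable (fun y => derive f y (basisv i)) x (basisv j)) /\
    continuous (fun x => derive (fun y => derive f y (basisv i)) x (basisv j)).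

Definition C2_boundary (A : set V) : Prop :=
  forall p, bdry A p ->
    exists (U : set V) (f : V -> R),
      open U /\ U p /\ C2 f /\
      (A `&` U = [set x | U x /\ f x <= 0]) /\
      exists i : 'I_N, derive f p (basisv i) != 0.

Definition obstacle (A : set V) : Prop :=
  compact A /\ strictly_convex A /\ C2_boundary A.

Definition idx3 (i : nat) : Prop := (1 <= i <= 3)%N.

Definition open_billiard3 (K : nat -> set V) : Prop :=
  (forall i, idx3 i -> obstacle (K i)) /\
  (forall i j, idx3 i -> idx3 j -> i <> j -> K i `&` K j = set0) /\
  (forall i j k, idx3 i -> idx3 j -> idx3 k -> i <> j -> j <> k -> i <> k ->
     conv_hull (K i `|` K j) `&` K k = set0).

Definition in_Sigma (xi : int -> nat) : Prop :=
  forall i : int, idx3 (xi i) /\ xi i <> xi (i + 1).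

Definition shiftn (j : nat) (xi : int -> nat) : int -> nat :=
  fun i => xi (i + j%:Z).

Definition outward_normal (A : set V) (p n : V) : Prop :=
  enorm n = 1 /\ forall y, A y -> dotv n (y - p) <= 0.

Definition billiard_traj (K : nat -> set V) (xi : int -> nat) (p : int -> V)
  : Prop :=
  forall i : int,
    bdry (K (xi i)) (p i) /\
    (forall t : R, 0 < t < 1 -> forall k, idx3 k ->
       ~ K k (p i + t *: (p (i + 1) - p i))) /\
    exists n, outward_normal (K (xi i)) (p i) n /\
      let v := unitv (p i - p (i - 1)) in
      let w := unitv (p (i + 1) - p i) in
      w = v - (2 * dotv v n) *: n.

Definition is_phi (K : nat -> set V) (phi : (int -> nat) -> V) : Prop :=
  forall xi, in_Sigma xi ->
    exists p, billiard_traj K xi p /\ phi xi = p 0.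

Definition birkhoff_avg (phi : (int -> nat) -> V) (xi : int -> nat) (n : nat)
  : V := (n%:R)^-1 *: \sum_(j < n) phi (shiftn j xi).

End Billiard.

Definition Bword (k : nat) : seq nat :=
  flatten (nseq (2 ^ (2 * k - 1)) [:: 1; 2]%N) ++
  flatten (nseq (2 ^ (2 * k)) [:: 1; 3]%N).

Definition Bprefix (m : nat) : seq nat := flatten [seq Bword k | k <- iota 1 m].

(* n-th letter (n >= 0) of the infinite word B_1 B_2 B_3 ...; Bprefix n.+1 has
   length > n *)
Definition Binf (n : nat) : nat := nth 0%N (Bprefix n.+1) n.

(* Main.v *)
Require Import Defs.
From HB Require Import structures.
From mathcomp Require Import all_boot all_order all_algebra.
From mathcomp Require Import all_classical all_reals all_analysis.
From mathcomp Require Import ring lra zify.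
Import Order.TTheory GRing.Theory Num.Theory.
Import numFieldNormedType.Exports.
Local Open Scope classical_set_scope.
Local Open Scope ring_scope.
Set Implicit Arguments. Unset Strict Implicit.
Lemma dotvE (R : realType) N (v u : 'rV[R]_N) : dotv v u = \sum_i v 0 i * u 0 i.
Proof. by rewrite /dotv mxE; apply: eq_bigr => i _; rewrite mxE. Qed.
Lemma dotv_ge0 (R : realType) N (v : 'rV[R]_N) : 0 <= dotv v v.
Proof. rewrite dotvE; apply: sumr_ge0 => i _; by rewrite -expr2 sqr_ge0. Qed.
Lemma expand (R : realType) N (d u : 'rV[R]_N) (a s : R) :
  \sum_i (a * d 0 i - s * u 0 i)^+2 = a^+2 * dotv d d - 2 * a * s * dotv d u + s^+2 * dotv u u.
Proof.
rewrite !dotvE !mulr_sumr -!sumrN -!big_split /=; apply: eq_bigr => i _; ring.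
Qed.
Lemma cs (R : realType) N (d u : 'rV[R]_N) eps e : 0 < eps -> 0 < e ->
  dotv d d <= eps^+2 -> dotv u u = e^+2 -> `|dotv d u| <= eps * e.
Proof.
move=> he hE hd hu.
have h1 := expand d u e eps. have h2 := expand d u e (- eps).
have g1 : 0 <= \sum_i (e * d 0 i - eps * u 0 i)^+2 by apply: sumr_ge0 => i _; rewrite sqr_ge0.
have g2 : 0 <= \sum_i (e * d 0 i - - eps * u 0 i)^+2 by apply: sumr_ge0 => i _; rewrite sqr_ge0.
rewrite h1 hu in g1; rewrite h2 hu in g2.
set P := dotv d u in g1 g2 *; set D := dotv d d in hd g1 g2.
have hee : 0 < e * eps by apply: mulr_gt0.
have k1 : e^+2 * D <= e^+2 * eps^+2 by rewrite ler_pM2l // exprn_gt0.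
rewrite ler_norml; apply/andP; split.
- have : (e*eps) * (- (eps * e)) <= (e * eps) * P by nra.
  by rewrite ler_pM2l.
- have : (e*eps) * P <= (e * eps) * (eps * e) by nra.
  by rewrite ler_pM2l.
Qed.
Lemma enorm_sq (R : realType) N (w : 'rV[R]_N) eps : 0 <= eps -> enorm w <= eps -> dotv w w <= eps^+2.
Proof.
move=> he; rewrite /enorm => h.
rewrite -(sqr_sqrtr (dotv_ge0 w)). rewrite ler_sqr //; rewrite ?nnegrE ?sqrtr_ge0 //.
Qed.
Lemma arith (R : realType) (m L sP sQ sR A B al be ga c eta : R) : 1 <= m -> 0 <= eta ->
 A = (4 * m-4)*sQ - (2 * m-4)*sP -> B = (8 * m-4)*sR - (4 * m-4)*sQ ->
 `|sP - L| <= eta -> `|sQ-L| <= eta -> `|sR - L| <= eta ->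
 `|A - m*(al+be)| <= 2 * m*c -> `|B - 2 * m*(al+ga)| <= 4 * m*c -> be - ga <= 12*eta + 4*c.
Proof.
move=> m1 e0 -> -> /ler_normlP [p1 p2] /ler_normlP [q1 q2] /ler_normlP [r1 r2]
  /ler_normlP [a1 a2] /ler_normlP [b1 b2].
have hP : `|(2 * m-4)*(sP - L)| <= 2 * m*eta.
  rewrite normrM; apply: (le_trans (y := `|2 * m-4| * eta)). rewrite ler_wpM2l //.
  by apply/ler_normlP; split; lra.
  rewrite ler_wpM2r //. apply/ler_normlP; split; lra.
have hQ : `|(4 * m-4)*(sQ - L)| <= 4 * m*eta.
  rewrite normrM; apply: (le_trans (y := `|4 * m-4| * eta)). rewrite ler_wpM2l //.
  by apply/ler_normlP; split; lra.
  rewrite ler_wpM2r //. apply/ler_normlP; split; lra.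
have hR : `|(8 * m-4)*(sR - L)| <= 8 * m*eta.
  rewrite normrM; apply: (le_trans (y := `|8 * m-4| * eta)). rewrite ler_wpM2l //.
  by apply/ler_normlP; split; lra.
  rewrite ler_wpM2r //. apply/ler_normlP; split; lra.
move: hP hQ hR => /ler_normlP [h1 h2] /ler_normlP [h3 h4] /ler_normlP [h5 h6].
have : m * (be - ga) <= m * (12*eta + 4*c).
  rewrite !mulrBr !mulrDr in h1 h2 h3 h4 h5 h6 *.
  rewrite !mulrDr in a1 a2 b1 b2. lra.
rewrite ler_pM2l //. lra.
Qed.

Section Comb.
Local Open Scope nat_scope.
Lemma Bprefix_S k : Bprefix k.+1 = Bprefix k ++ Bword k.+1.
Proof.
rewrite /Bprefix (_ : iota 1 k.+1 = iota 1 k ++ [:: k.+1]).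
  by rewrite map_cat flatten_cat /= cats0.
by have := iotaD 1 k 1; rewrite addn1 add1n.
Qed.

Lemma size_fl n (s : seq nat) : size (flatten (nseq n s)) = n * size s.
Proof. by elim: n => //= n IH; rewrite size_cat IH mulSn. Qed.

Lemma size_Bword k : size (Bword k.+1) = 6 * 2 ^ (2 * k + 1).
Proof.
rewrite /Bword size_cat !size_fl /=.
have -> : (2 * k.+1 - 1 = 2 * k + 1)%N by lia.
have -> : (2 * k.+1 = (2 * k + 1).+1)%N by lia.
rewrite expnS; lia.
Qed.

Lemma size_Bprefix k : (size (Bprefix k) + 4 = 2 ^ (2 * k + 2))%N.
Proof.
elim: k => [|k IH] //. rewrite Bprefix_S size_cat size_Bword.
have -> : (2 * k.+1 + 2 = (2 * k + 1).+1.+1.+1)%N by lia.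
move: IH; have -> : (2 * k + 2 = (2 * k + 1).+1)%N by lia.
rewrite !expnS. lia.
Qed.

Lemma size_Bprefix_ge k : (k <= size (Bprefix k))%N.
Proof.
elim: k => // k IH; rewrite Bprefix_S size_cat size_Bword.
have : (0 < 2 ^ (2 * k + 1))%N by rewrite expn_gt0.
lia.
Qed.

Lemma nth_Bprefix_mono m m' n : (m <= m')%N -> (n < size (Bprefix m))%N ->
  nth 0%N (Bprefix m') n = nth 0%N (Bprefix m) n.
Proof.
move=> hm hn; elim: m' hm => [|m' IH]; first by rewrite leqn0 => /eqP ->.
rewrite leq_eqVlt => /orP [/eqP -> //|]; rewrite ltnS => hm.
rewrite Bprefix_S nth_cat; rewrite IH //.
have := size_Bprefix_ge m. 
suff : (size (Bprefix m) <= size (Bprefix m'))%N by move=> h1 _; rewrite (leq_trans hn h1).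
elim: m' hm {IH} => [|m' IH']; first by rewrite leqn0 => /eqP ->.
rewrite leq_eqVlt => /orP [/eqP -> //|]; rewrite ltnS => hm.
by rewrite Bprefix_S size_cat; apply: leq_trans (IH' hm) (leq_addr _ _).
Qed.

Lemma Binf_nth m n : (n < size (Bprefix m))%N -> Binf n = nth 0%N (Bprefix m) n.
Proof.
move=> hn; rewrite /Binf.
have h1 : (n < size (Bprefix n.+1))%N by apply: leq_trans (size_Bprefix_ge _).
rewrite -(@nth_Bprefix_mono n.+1 (maxn m n.+1)) ?leq_maxr //.
by rewrite (@nth_Bprefix_mono m) ?leq_maxl.
Qed.

Lemma Binf_block k i : (i < 6 * 2 ^ (2 * k + 1))%N ->
  Binf (size (Bprefix k) + i) = nth 0%N (Bword k.+1) i.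
Proof.
move=> hi; rewrite (@Binf_nth k.+1); last by rewrite Bprefix_S size_cat size_Bword ltn_add2l.
by rewrite Bprefix_S nth_cat ltnNge leq_addr /= addKn.
Qed.

Lemma nth_fl a b n i : (i < 2 * n)%N ->
  nth 0%N (flatten (nseq n [:: a; b])) i = if odd i then b else a.
Proof.
elim: n i => [|n IH] i; first by rewrite muln0.
case: i => [|[|i]] //= hi. rewrite IH ?negbK //. lia.
Qed.

Lemma Binf_12 k i : (i < 2 * 2 ^ (2 * k + 1))%N ->
  Binf (size (Bprefix k) + i) = if odd i then 2%N else 1%N.
Proof.
move=> hi; rewrite Binf_block; last by lia.
rewrite /Bword nth_cat size_fl /=.
have -> : (2 * k.+1 - 1 = 2 * k + 1)%N by lia.
rewrite (_ : i < _ = true); last by lia.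
by rewrite nth_fl.
Qed.

Lemma Binf_13 k i : (i < 4 * 2 ^ (2 * k + 1))%N ->
  Binf (size (Bprefix k) + 2 * 2 ^ (2 * k + 1) + i) = if odd i then 3%N else 1%N.
Proof.
move=> hi; rewrite -addnA Binf_block; last by lia.
rewrite /Bword nth_cat size_fl /=.
have -> : (2 * k.+1 - 1 = 2 * k + 1)%N by lia.
rewrite (_ : _ < _ = false); last by lia.
rewrite nth_fl.
  by rewrite (_ : 2 * 2 ^ (2 * k + 1) + i - 2 ^ (2 * k + 1) * 2 = i)%N //; lia.
have -> : (2 * k.+1 = (2 * k + 1).+1)%N by lia.
rewrite expnS; lia.
Qed.



End Comb.

Lemma coord_le (R : realType) N (x : 'rV[R]_N) i : `|x 0 i| <= `|x|.
Proof.
rewrite [X in _ <= X]mx_normrE.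
exact: (le_bigmax _ (fun ij : 'I_1 * 'I_N => `|x ij.1 ij.2|) (0, i)).
Qed.

Lemma bnd (R : realType) N (A : set 'rV[R]_N) : compact A -> exists M, forall x, A x -> `|x| <= M.
Proof.
move=> /compact_bounded [M [_ HM]].
exists (M+1) => x Ax. apply: HM => //. rewrite ltrDl //.
Qed.

Lemma diam_le (R : realType) N (A : set 'rV[R]_N) x y :
  compact A -> A x -> A y -> enorm (x - y) <= ediam A.
Proof.
move=> /bnd [M HM] Ax Ay; apply: sup_upper_bound; last by exists x => //; exists y.
split; first by exists (enorm (x - y)); exists x => //; exists y.
exists (Num.sqrt (\sum_(i < N) (2 * M)^+2)) => _ [x' Ax' [y' Ay' <-]].
rewrite /enorm ler_sqrt; last by apply: sumr_ge0 => i _; rewrite sqr_ge0.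
rewrite dotvE; apply: ler_sum => i _; rewrite !mxE.
have h1 := le_trans (coord_le x' i) (HM _ Ax').
have h2 := le_trans (coord_le y' i) (HM _ Ay').
move: h1 h2 => /ler_normlP [h1 h1'] /ler_normlP [h2 h2'].
rewrite expr2; nra.
Qed.

Lemma memK (R : realType) N (K : nat -> set 'rV[R]_N) phi xi (j : nat) c :
  open_billiard3 K -> is_phi K phi -> in_Sigma xi -> xi j%:Z = c -> idx3 c ->
  K c (phi (shiftn j xi)).
Proof.
move=> [HK _] Hphi Hs Hj Hc.
have Hs' : in_Sigma (shiftn j xi).
  move=> i; rewrite /shiftn; have [h1 h2] := Hs (i + j%:Z); split => //.
  by rewrite addrAC.
have [p [Htr ->]] := Hphi _ Hs'.
have [[Hb _] _] := Htr 0.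
rewrite /shiftn add0r Hj in Hb.
have [cK _] := HK c Hc.
have clK := compact_closed (@norm_hausdorff _ _) cK.
by rewrite ((closure_id _).1 clK).
Qed.

Lemma dotvB (R : realType) N (x a u : 'rV[R]_N) : dotv x u - dotv a u = dotv (x - a) u.
Proof. rewrite !dotvE -sumrB; apply: eq_bigr => i _; rewrite !mxE; ring. Qed.

Lemma dotv_avg (R : realType) N (v : nat -> 'rV[R]_N) (u : 'rV[R]_N) n :
  dotv (n%:R^-1 *: \sum_(j < n) v j) u = n%:R^-1 * \sum_(j < n) dotv (v j) u.
Proof.
rewrite dotvE (eq_bigr (fun i => n%:R^-1 * \sum_(j < n) (v j 0 i * u 0 i))).
  by rewrite -mulr_sumr exchange_big /=; congr (_ * _); apply: eq_bigr => j _; rewrite dotvE.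
by move=> i _; rewrite !mxE summxE -mulrA mulr_suml.
Qed.

Lemma dotv_bound (R : realType) N (w u : 'rV[R]_N) :
  `|dotv w u| <= `|w| * \sum_i `|u 0 i|.
Proof.
rewrite dotvE mulr_sumr; apply: le_trans (ler_norm_sum _ _ _) _.
apply: ler_sum => i _; rewrite normrM ler_wpM2r //; exact: coord_le.
Qed.

Lemma sum_alt (R : realType) (a b : R) M :
  \sum_(i < 2 * M) (if odd i then b else a) = M%:R * (a + b).
Proof.
elim: M => [|M IH]; first by rewrite muln0 big_ord0 mul0r.
rewrite (_ : 2 * M.+1 = (2 * M).+2)%N; last by rewrite mulnS addnC addn2.
rewrite !big_ord_recr /= IH /= oddM /= -[M.+1]addn1 natrD; ring.
Qed.

Lemma block_bound (R : realType) (F g : nat -> R) c n :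
  (forall i, (i < n)%N -> `|F i - g i| <= c) ->
  `|\sum_(i < n) F i - \sum_(i < n) g i| <= n%:R * c.
Proof.
move=> H; rewrite -sumrB; apply: le_trans (ler_norm_sum _ _ _) _.
have -> : n%:R * c = \sum_(i < n) c by rewrite sumr_const card_ord mulr_natl.
by apply: ler_sum => i _; apply: H.
Qed.

Lemma sum_split (R : realType) (y : nat -> R) P n :
  \sum_(j < P + n) y j - \sum_(j < P) y j = \sum_(i < n) y (P + i)%N.
Proof.
rewrite big_split_ord /= addrAC subrr add0r; apply: eq_bigr => i _ //.
Qed.

Theorem mainTheorem7 (R : realType) (N : nat)
  (a1 a2 a3 : 'rV[R]_N) (eps : R) (K : nat -> set 'rV[R]_N)
  (phi : (int -> nat) -> 'rV[R]_N) (xi : int -> nat) :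
  a1 != a2 -> a1 != a3 -> a2 != a3 ->
  0 < eps ->
  enorm (a2 - a3) > 12 * eps ->
  enorm (a1 - a2) > 2 * eps ->
  enorm (a1 - a3) > 2 * eps ->
  edist_set a1 (line_through a2 a3) > 2 * eps ->
  open_billiard3 K ->
  (K 1%N) a1 -> (K 2%N) a2 -> (K 3%N) a3 ->
  ediam (K 1%N) <= eps -> ediam (K 2%N) <= eps -> ediam (K 3%N) <= eps ->
  is_phi K phi ->
  in_Sigma xi ->
  (forall n : nat, xi n%:Z = Binf n) ->
  ~ (exists l : 'rV[R]_N, birkhoff_avg phi xi n @[n --> \oo] --> l).
Proof.
move=> _ _ _ eps0 H23 _ _ _ Hbil K1 K2 K3 D1 D2 D3 Hphi Hs Hxi [l Hl].
set u := a2 - a3. set e := enorm u.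
have e12 : 12 * eps < e by [].
have e0 : 0 < e by lra.
have Huu : dotv u u = e^+2 by rewrite /e /enorm sqr_sqrtr // dotv_ge0.
set y := fun j : nat => dotv (phi (shiftn j xi)) u.
set al := dotv a1 u. set be := dotv a2 u. set ga := dotv a3 u.
have Hbg : be - ga = e^+2 by rewrite /be /ga dotvB.
have Hy : forall j c a, Binf j = c -> idx3 c -> K c a -> ediam (K c) <= eps ->
    `|y j - dotv a u| <= eps * e.
  move=> j c a Hj Hc Ka Dc; rewrite /y dotvB; apply: cs => //.
  apply: enorm_sq; first lra.
  apply: le_trans Dc; apply: diam_le => //; first exact: (Hbil.1 c Hc).1.
  exact: (memK Hbil Hphi Hs (etrans (Hxi j) Hj) Hc).
set s := fun n : nat => dotv (birkhoff_avg phi xi n) u.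
have HS : forall n, \sum_(j < n) y j = n%:R * s n.
  move=> n; rewrite /s /birkhoff_avg (dotv_avg (fun j : nat => phi (shiftn j xi))) mulrA; case: n => [|n].
    by rewrite !big_ord0 mulr0.
  by rewrite mulfV ?mul1r // pnatr_eq0.
set C := \sum_i `|u 0 i|.
have C0 : 0 <= C by apply: sumr_ge0.
have Hconv : forall eta, 0 < eta -> exists N0, forall n, (N0 <= n)%N -> `|s n - dotv l u| <= eta.
  move=> eta he.
  have := (cvgrPdist_le _ _).1 Hl (eta / (C + 1)).
  case; first by apply: divr_gt0 => //; lra.
  move=> N0 _ HN0; exists N0 => n hn.
  have := HN0 n hn => /= hb.
  rewrite /s dotvB; apply: le_trans (dotv_bound _ _) _.
  rewrite distrC; apply: le_trans (ler_wpM2r C0 hb) _.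
  rewrite mulrAC ler_pdivrMr; last lra.
  by rewrite ler_wpM2l; [|lra|lra].
set eta := (e^+2 - 4 * (eps * e)) / 24.
have epe : 0 < e^+2 - 4 * (eps * e) by rewrite expr2; nra.
have eta0 : 0 < eta by apply: divr_gt0.
have [N0 HN0] := Hconv eta eta0.
set k := N0. set P := size (Bprefix k). set M := (2 ^ (2 * k + 1))%N.
have HP4 : (P + 4 = 2 * M)%N.
  by rewrite /P size_Bprefix /M (_ : 2 * k + 2 = (2 * k + 1).+1)%N ?expnS // addnS addn1.
have HPk : (k <= P)%N := size_Bprefix_ge k.
have M1 : (1 <= M)%N by rewrite expn_gt0.
set Q := (P + 2 * M)%N. set Rr := (Q + 4 * M)%N.
have HA : `|(\sum_(j < Q) y j - \sum_(j < P) y j) - M%:R * (al + be)| <= 2 * M%:R * (eps * e).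
  rewrite sum_split -(sum_alt al be M) (_ : 2 * M%:R = (2 * M)%:R :> R); last by rewrite natrM.
  apply: (@block_bound _ (fun i => y (P + i)%N) (fun i : nat => if odd i then be else al)) => i hi.
  have := Binf_12 hi; rewrite -/P; case: (odd i) => Hb.
    exact: (Hy _ _ _ Hb _ K2 D2).
  exact: (Hy _ _ _ Hb _ K1 D1).
have HB : `|(\sum_(j < Rr) y j - \sum_(j < Q) y j) - 2 * M%:R * (al + ga)| <= 4 * M%:R * (eps * e).
  rewrite sum_split (_ : 2 * M%:R = (2 * M)%:R :> R); last by rewrite natrM.
  rewrite -(sum_alt al ga (2 * M)) (_ : 4 * M%:R = (4 * M)%:R :> R); last by rewrite natrM.
  rewrite (_ : (2 * (2 * M) = 4 * M)%N); last by rewrite mulnA.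
  apply: (@block_bound _ (fun i => y (Q + i)%N) (fun i : nat => if odd i then ga else al)) => i hi.
  have := Binf_13 (k := k) (i := i); rewrite -/P -/M -/Q => Hb.
  case: (odd i) (Hb hi) => Hb'.
    exact: (Hy _ _ _ Hb' _ K3 D3).
  exact: (Hy _ _ _ Hb' _ K1 D1).
rewrite !HS in HA HB.
have eP : (P%:R : R) = 2 * M%:R - 4.
  have := congr1 (fun n : nat => (n%:R : R)) HP4 => /=; rewrite natrD natrM; lra.
have eQ : (Q%:R : R) = 4 * M%:R - 4 by rewrite /Q natrD natrM eP; lra.
have eR : (Rr%:R : R) = 8 * M%:R - 4 by rewrite /Rr natrD natrM eQ; lra.
rewrite eP eQ in HA; rewrite eR eQ in HB.
have hm : 1 <= (M%:R : R) by rewrite ler1n.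
have hQ : (N0 <= Q)%N by rewrite /Q; apply: leq_trans HPk (leq_addr _ _).
have hR : (N0 <= Rr)%N by rewrite /Rr; apply: leq_trans hQ (leq_addr _ _).
have := arith hm (ltW eta0) erefl erefl (HN0 P HPk) (HN0 Q hQ) (HN0 Rr hR) HA HB.
rewrite Hbg /eta; lra.
Qed.
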